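(* Let $M$ be a geodesic metric space with convex metric, $Z\subseteq M$, $\nu>0$, $L\ge0$. If a geodesic triangle $\Delta$ in $M$ is $\nu$--thin relative to $Z$ and the $\nu$--fat part of some side of $\Delta$ has length at most $L$, then $\Delta$ is $2(L+\nu)$--thin.
   Context: For a geodesic triangle $\Delta(a,b,c)$ let $\pi\colon\Delta\to Y_{abc}$ be the map to the comparison tripod. $\Delta$ is $\nu$--thin if $\operatorname{diam}\pi^{-1}(p)\le\nu$ for all $p\in Y_{abc}$. $\Delta$ is $\nu$--thin relative to $U$ if it is not $\nu$--thin and for every $p\in Y_{abc}$ either $\operatorname{diam}\pi^{-1}(p)\le\nu$ or $\pi^{-1}(p)\subseteq N_\nu(U)$. The $\nu$--fat part of $\Delta$ is the union of the fibers of $\pi$ of diameter $\ge\nu$; the $\nu$--fat part of a side is its intersection with the $\nu$--fat part of $\Delta$. A metric is convex if the distance function between two constant-speed geodesics is convex. *)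

(* Defs.v *)
From Stdlib Require Import Reals Lra.
Open Scope R_scope.

Section Defs.
Context {M : Type}.
Variable d : M -> M -> R.

Definition is_metric : Prop :=
  (forall x y, d x y = 0 <-> x = y) /\
  (forall x y, d x y = d y x) /\
  (forall x y z, d x z <= d x y + d y z).

Definition geodesic (x y : M) (g : R -> M) : Prop :=
  g 0 = x /\ g (d x y) = y /\
  forall s t, 0 <= s <= d x y -> 0 <= t <= d x y ->
    d (g s) (g t) = Rabs (s - t).

Definition geodesic_space : Prop :=
  forall x y, exists g, geodesic x y g.

Definition const_speed_geodesic (c : R -> M) : Prop :=
  exists lam, 0 <= lam /\
    forall s t, 0 <= s <= 1 -> 0 <= t <= 1 -> d (c s) (c t) = lam * Rabs (s - t).

Definition convex_on01 (f : R -> R) : Prop :=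
  forall s t th, 0 <= s <= 1 -> 0 <= t <= 1 -> 0 <= th <= 1 ->
    f ((1 - th) * s + th * t) <= (1 - th) * f s + th * f t.

Definition convex_metric : Prop :=
  forall c1 c2, const_speed_geodesic c1 -> const_speed_geodesic c2 ->
    convex_on01 (fun t => d (c1 t) (c2 t)).

Record gtriangle := Tri {
  va : M; vb : M; vc : M;
  sab : R -> M;
  sbc : R -> M;
  sca : R -> M
}.

Definition geodesic_triangle (T : gtriangle) : Prop :=
  geodesic (va T) (vb T) (sab T) /\
  geodesic (vb T) (vc T) (sbc T) /\
  geodesic (vc T) (va T) (sca T).

Inductive side := SAB | SBC | SCA.
Inductive leg := LA | LB | LC.

(** Points of the comparison tripod Y_abc: the centre, or a point on a leg at
    positive distance s from the centre. *)
Inductive tripod := Center | OnLeg (l : leg) (s : R).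

Definition mk_tp (l : leg) (s : R) : tripod :=
  if Rle_dec s 0 then Center else OnLeg l s.

(** Gromov products = leg lengths of the tripod. *)
Definition leg_a (T : gtriangle) := (d (va T) (vb T) + d (va T) (vc T) - d (vb T) (vc T)) / 2.
Definition leg_b (T : gtriangle) := (d (vb T) (va T) + d (vb T) (vc T) - d (va T) (vc T)) / 2.
Definition leg_c (T : gtriangle) := (d (vc T) (va T) + d (vc T) (vb T) - d (va T) (vb T)) / 2.

Definition side_len (T : gtriangle) (sd : side) : R :=
  match sd with
  | SAB => d (va T) (vb T) | SBC => d (vb T) (vc T) | SCA => d (vc T) (va T)
  end.

Definition side_map (T : gtriangle) (sd : side) : R -> M :=
  match sd with SAB => sab T | SBC => sbc T | SCA => sca T end.

(** The map pi : Delta -> Y_abc; a point of Delta is a side together with the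
    arclength parameter t in [0, side_len] measured from the initial vertex. *)
Definition pi (T : gtriangle) (sd : side) (t : R) : tripod :=
  match sd with
  | SAB => if Rle_dec t (leg_a T) then mk_tp LA (leg_a T - t) else mk_tp LB (t - leg_a T)
  | SBC => if Rle_dec t (leg_b T) then mk_tp LB (leg_b T - t) else mk_tp LC (t - leg_b T)
  | SCA => if Rle_dec t (leg_c T) then mk_tp LC (leg_c T - t) else mk_tp LA (t - leg_c T)
  end.

Definition fiber (T : gtriangle) (p : tripod) (x : M) : Prop :=
  exists sd t, 0 <= t <= side_len T sd /\ pi T sd t = p /\ side_map T sd t = x.

(** diam S <= r  and  diam S >= r  (diam = sup of pairwise distances). *)
Definition diam_le (S : M -> Prop) (r : R) : Prop :=
  forall x y, S x -> S y -> d x y <= r.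
Definition diam_ge (S : M -> Prop) (r : R) : Prop :=
  forall eps, 0 < eps -> exists x y, S x /\ S y /\ r - eps < d x y.

Definition nbhd (U : M -> Prop) (r : R) (x : M) : Prop :=
  exists u, U u /\ d x u <= r.

Definition thin (nu : R) (T : gtriangle) : Prop :=
  forall p, diam_le (fiber T p) nu.

Definition thin_rel (nu : R) (T : gtriangle) (U : M -> Prop) : Prop :=
  ~ thin nu T /\
  forall p, diam_le (fiber T p) nu \/ (forall x, fiber T p x -> nbhd U nu x).

Definition fat_part (nu : R) (T : gtriangle) (x : M) : Prop :=
  exists p, diam_ge (fiber T p) nu /\ fiber T p x.

Definition fat_part_side (nu : R) (T : gtriangle) (sd : side) (x : M) : Prop :=
  (exists t, 0 <= t <= side_len T sd /\ side_map T sd t = x) /\ fat_part nu T x.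

(** length of a subset of a geodesic segment, measured as its extent along
    the segment (= its diameter, the segment being isometric to an interval) *)
Definition length_le (S : M -> Prop) (L : R) : Prop := diam_le S L.

End Defs.

(* Main.v *)
Require Import Defs.
From Stdlib Require Import Reals Lra.
Open Scope R_scope.

Lemma m_d0 (M : Type) (d : M -> M -> R) : is_metric d -> forall x, d x x = 0.
Proof. intros [H _] x. apply H. reflexivity. Qed.

Lemma m_pos (M : Type) (d : M -> M -> R) : is_metric d -> forall x y, 0 <= d x y.
Proof.
  intros Hm x y. pose proof (m_d0 M d Hm x) as H0.
  destruct Hm as [_ [Hs Ht]]. pose proof (Ht x y x). rewrite (Hs y x) in H. lra.
Qed.

Lemma claim (nu A u : R) (F : R -> Prop) : 0 < nu -> 0 <= A -> u <= 2 * A ->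
  (forall x, 0 < x <= A -> nu <= u - 2 * x -> F x) -> F 0 ->
  exists x, 0 <= x /\ u <= 2 * x + nu /\ F x.
Proof.
  intros Hnu HA Hu H1 H0.
  destruct (Rle_dec ((u - nu) / 2) 0) as [Hle|Hgt].
  - exists 0. split; [lra|]. split; [lra| exact H0].
  - exists ((u - nu) / 2). split; [lra|]. split; [lra|]. apply H1; lra.
Qed.

Lemma core (nu L A B uA uB : R) (Fat : R -> Prop) :
  0 < nu -> 0 <= L -> 0 <= A -> 0 <= B -> uA <= 2 * A -> uB <= 2 * B ->
  (forall x, 0 < x <= A -> nu <= uA - 2 * x -> Fat (A - x)) ->
  (forall x, 0 < x <= B -> nu <= uB - 2 * x -> Fat (A + x)) ->
  (nu <= uA \/ nu <= uB -> Fat A) ->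
  (forall t t', Fat t -> Fat t' -> t' - t <= L) ->
  uA + uB <= 2 * (L + nu).
Proof.
  intros Hnu HL HA HB HuA HuB H1 H2 H3 H4.
  destruct (Rlt_dec uA nu); destruct (Rlt_dec uB nu); try lra;
  (assert (HC : Fat A) by (apply H3; lra));
  (destruct (claim nu A uA (fun x => Fat (A - x)) Hnu HA HuA H1) as [xa [Ha1 [Ha2 Ha3]]];
   [ replace (A - 0) with A by ring; exact HC | ]);
  (destruct (claim nu B uB (fun x => Fat (A + x)) Hnu HB HuB H2) as [xb [Hb1 [Hb2 Hb3]]];
   [ replace (A + 0) with A by ring; exact HC | ]);
  pose proof (H4 _ _ Ha3 Hb3); lra.
Qed.

Lemma leg_gen (M : Type) (d : M -> M -> R) (Hmet : is_metric d) (Hconv : convex_metric d)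
  (p1 p2 : R -> M) (K : R) : 0 <= K ->
  (forall s t, 0 <= s <= K -> 0 <= t <= K -> d (p1 s) (p1 t) = Rabs (s - t)) ->
  (forall s t, 0 <= s <= K -> 0 <= t <= K -> d (p2 s) (p2 t) = Rabs (s - t)) ->
  p1 K = p2 K ->
  (forall s, 0 <= s <= K -> d (p1 s) (p2 s) <= d (p1 0) (p2 0)) /\
  (forall s, 0 <= s <= K -> d (p1 0) (p2 0) - 2 * s <= d (p1 s) (p2 s)) /\
  d (p1 0) (p2 0) <= 2 * K.
Proof.
  intros HK I1 I2 HE.
  pose proof (m_d0 M d Hmet) as H0. pose proof (m_pos M d Hmet) as Hp.
  destruct Hmet as [_ [Hs Ht]].
  split; [|split].
  - intros s Hs0. destruct (Req_dec K 0) as [HK0|HK0].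
    + replace s with 0 by lra. lra.
    + set (c1 := fun th => p1 (th * K)). set (c2 := fun th => p2 (th * K)).
      assert (C1 : const_speed_geodesic d c1).
      { exists K. split; [lra|]. intros a b Ha Hb. unfold c1. rewrite I1 by nra.
        rewrite <- Rmult_minus_distr_r, Rabs_mult, (Rabs_pos_eq K) by lra. ring. }
      assert (C2 : const_speed_geodesic d c2).
      { exists K. split; [lra|]. intros a b Ha Hb. unfold c2. rewrite I2 by nra.
        rewrite <- Rmult_minus_distr_r, Rabs_mult, (Rabs_pos_eq K) by lra. ring. }
      assert (Hth : 0 <= s / K <= 1).
      { split. apply Rmult_le_pos; [lra| apply Rlt_le, Rinv_0_lt_compat; lra].
        apply (Rmult_le_reg_r K); [lra|]. field_simplify; lra. }
      pose proof (Hconv c1 c2 C1 C2 0 1 (s / K) ltac:(lra) ltac:(lra) Hth) as H.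
      cbv beta in H. unfold c1, c2 in H.
      replace ((1 - s / K) * 0 + s / K * 1) with (s / K) in H by ring.
      replace (s / K * K) with s in H by (field; lra).
      replace (0 * K) with 0 in H by ring. replace (1 * K) with K in H by ring.
      rewrite HE, H0 in H. pose proof (Hp (p1 0) (p2 0)). nra.
  - intros s Hs0. pose proof (Ht (p1 0) (p1 s) (p2 0)). pose proof (Ht (p1 s) (p2 s) (p2 0)).
    rewrite I1 in H by lra. rewrite (Hs (p2 s) (p2 0)), I2 in H1 by lra.
    replace (0 - s) with (- s) in H by ring. rewrite Rabs_Ropp, Rabs_pos_eq in H by lra.
    replace (0 - s) with (- s) in H1 by ring. rewrite Rabs_Ropp, Rabs_pos_eq in H1 by lra. lra.
  - pose proof (Ht (p1 0) (p1 K) (p2 0)). rewrite HE in H at 2. rewrite I1 in H by lra.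
    rewrite (Hs (p2 K)), I2 in H by lra.
    replace (0 - K) with (- K) in H by ring. rewrite Rabs_Ropp, Rabs_pos_eq in H by lra. lra.
Qed.

Lemma gromov (M : Type) (d : M -> M -> R) (Hmet : is_metric d) (T : gtriangle (M:=M)) :
  0 <= leg_a d T /\ 0 <= leg_b d T /\ 0 <= leg_c d T /\
  leg_a d T + leg_b d T = d (va T) (vb T) /\
  leg_b d T + leg_c d T = d (vb T) (vc T) /\
  leg_c d T + leg_a d T = d (vc T) (va T).
Proof.
  destruct Hmet as [_ [Hs Ht]]. unfold leg_a, leg_b, leg_c.
  pose proof (Hs (va T) (vb T)). pose proof (Hs (vb T) (vc T)). pose proof (Hs (vc T) (va T)).
  pose proof (Ht (vb T) (va T) (vc T)). pose proof (Ht (va T) (vb T) (vc T)).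
  pose proof (Ht (va T) (vc T) (vb T)).
  repeat split; lra.
Qed.

Ltac tp_solve :=
  unfold pi, mk_tp; simpl;
  repeat match goal with |- context [Rle_dec ?a ?b] => destruct (Rle_dec a b) end;
  try (exfalso; lra); try reflexivity; f_equal; ring.

Lemma fiber_cases (M : Type) (d : M -> M -> R) (Hmet : is_metric d) (T : gtriangle (M:=M)) p x :
  fiber d T p x ->
 (p = Center /\ (x = sab T (leg_a d T) \/ x = sbc T (leg_b d T) \/ x = sca T (leg_c d T))) \/
 (exists s, 0 < s <= leg_a d T /\ p = OnLeg LA s /\ (x = sab T (leg_a d T - s) \/ x = sca T (leg_c d T + s))) \/
 (exists s, 0 < s <= leg_b d T /\ p = OnLeg LB s /\ (x = sbc T (leg_b d T - s) \/ x = sab T (leg_a d T + s))) \/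
 (exists s, 0 < s <= leg_c d T /\ p = OnLeg LC s /\ (x = sca T (leg_c d T - s) \/ x = sbc T (leg_b d T + s))).
Proof.
  pose proof (gromov M d Hmet T) as G.
  intros [sd [t [Ht [Hp Hx]]]]. destruct sd; simpl in *; unfold pi, mk_tp in Hp;
  repeat match type of Hp with context [Rle_dec ?a ?b] => destruct (Rle_dec a b) end; subst p x.
  - left. split; [reflexivity|]. left. f_equal. lra.
  - right; left. exists (leg_a d T - t). split; [lra|]. split; [reflexivity|]. left. f_equal; ring.
  - exfalso; lra.
  - right; right; left. exists (t - leg_a d T). split; [lra|]. split; [reflexivity|]. right. f_equal; ring.
  - left. split; [reflexivity|]. right; left. f_equal. lra.
  - right; right; left. exists (leg_b d T - t). split; [lra|]. split; [reflexivity|]. left. f_equal; ring.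
  - exfalso; lra.
  - right; right; right. exists (t - leg_b d T). split; [lra|]. split; [reflexivity|]. right. f_equal; ring.
  - left. split; [reflexivity|]. right; right. f_equal. lra.
  - right; right; right. exists (leg_c d T - t). split; [lra|]. split; [reflexivity|]. left. f_equal; ring.
  - exfalso; lra.
  - right; left. exists (t - leg_c d T). split; [lra|]. split; [reflexivity|]. right. f_equal; ring.
Qed.

Section F.
End F.

Lemma fib_LA1 (M : Type) (d : M -> M -> R) (Hmet : is_metric d) (T : gtriangle (M:=M)) s :
  0 < s <= leg_a d T -> fiber d T (OnLeg LA s) (sab T (leg_a d T - s)).
Proof. pose proof (gromov M d Hmet T). intros Hs. exists SAB, (leg_a d T - s). simpl.
  repeat split; try lra. tp_solve. Qed.
Lemma fib_LA2 (M : Type) (d : M -> M -> R) (Hmet : is_metric d) (T : gtriangle (M:=M)) s :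
  0 < s <= leg_a d T -> fiber d T (OnLeg LA s) (sca T (leg_c d T + s)).
Proof. pose proof (gromov M d Hmet T). intros Hs. exists SCA, (leg_c d T + s). simpl.
  repeat split; try lra. tp_solve. Qed.
Lemma fib_LB1 (M : Type) (d : M -> M -> R) (Hmet : is_metric d) (T : gtriangle (M:=M)) s :
  0 < s <= leg_b d T -> fiber d T (OnLeg LB s) (sbc T (leg_b d T - s)).
Proof. pose proof (gromov M d Hmet T). intros Hs. exists SBC, (leg_b d T - s). simpl.
  repeat split; try lra. tp_solve. Qed.
Lemma fib_LB2 (M : Type) (d : M -> M -> R) (Hmet : is_metric d) (T : gtriangle (M:=M)) s :
  0 < s <= leg_b d T -> fiber d T (OnLeg LB s) (sab T (leg_a d T + s)).
Proof. pose proof (gromov M d Hmet T). intros Hs. exists SAB, (leg_a d T + s). simpl.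
  repeat split; try lra. tp_solve. Qed.
Lemma fib_LC1 (M : Type) (d : M -> M -> R) (Hmet : is_metric d) (T : gtriangle (M:=M)) s :
  0 < s <= leg_c d T -> fiber d T (OnLeg LC s) (sca T (leg_c d T - s)).
Proof. pose proof (gromov M d Hmet T). intros Hs. exists SCA, (leg_c d T - s). simpl.
  repeat split; try lra. tp_solve. Qed.
Lemma fib_LC2 (M : Type) (d : M -> M -> R) (Hmet : is_metric d) (T : gtriangle (M:=M)) s :
  0 < s <= leg_c d T -> fiber d T (OnLeg LC s) (sbc T (leg_b d T + s)).
Proof. pose proof (gromov M d Hmet T). intros Hs. exists SBC, (leg_b d T + s). simpl.
  repeat split; try lra. tp_solve. Qed.
Lemma fib_C1 (M : Type) (d : M -> M -> R) (Hmet : is_metric d) (T : gtriangle (M:=M)) :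
  fiber d T Center (sab T (leg_a d T)).
Proof. pose proof (gromov M d Hmet T). exists SAB, (leg_a d T). simpl.
  repeat split; try lra. tp_solve. Qed.
Lemma fib_C2 (M : Type) (d : M -> M -> R) (Hmet : is_metric d) (T : gtriangle (M:=M)) :
  fiber d T Center (sbc T (leg_b d T)).
Proof. pose proof (gromov M d Hmet T). exists SBC, (leg_b d T). simpl.
  repeat split; try lra. tp_solve. Qed.
Lemma fib_C3 (M : Type) (d : M -> M -> R) (Hmet : is_metric d) (T : gtriangle (M:=M)) :
  fiber d T Center (sca T (leg_c d T)).
Proof. pose proof (gromov M d Hmet T). exists SCA, (leg_c d T). simpl.
  repeat split; try lra. tp_solve. Qed.

Lemma fat_of (M : Type) (d : M -> M -> R) (T : gtriangle (M:=M)) nu p x y :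
  fiber d T p x -> fiber d T p y -> nu <= d x y -> fat_part d nu T x /\ fat_part d nu T y.
Proof.
  intros Hx Hy H. split; exists p; (split; [|assumption]);
  intros eps He; exists x, y; repeat split; auto; lra.
Qed.

Ltac iso_solve H :=
  intros s t Hs Ht; rewrite H by lra;
  first [ f_equal; ring | replace (_ - _) with (- (s - t)) by ring; apply Rabs_Ropp ].

Lemma legs (M : Type) (d : M -> M -> R) (Hmet : is_metric d) (Hconv : convex_metric d)
  (T : gtriangle (M:=M)) (HT : geodesic_triangle d T) :
  let A := leg_a d T in let B := leg_b d T in let C := leg_c d T in
  ((forall s, 0 <= s <= A -> d (sab T (A - s)) (sca T (C + s)) <= d (sab T A) (sca T C)) /\
   (forall s, 0 <= s <= A -> d (sab T A) (sca T C) - 2 * s <= d (sab T (A - s)) (sca T (C + s))) /\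
   d (sab T A) (sca T C) <= 2 * A) /\
  ((forall s, 0 <= s <= B -> d (sbc T (B - s)) (sab T (A + s)) <= d (sbc T B) (sab T A)) /\
   (forall s, 0 <= s <= B -> d (sbc T B) (sab T A) - 2 * s <= d (sbc T (B - s)) (sab T (A + s))) /\
   d (sbc T B) (sab T A) <= 2 * B) /\
  ((forall s, 0 <= s <= C -> d (sca T (C - s)) (sbc T (B + s)) <= d (sca T C) (sbc T B)) /\
   (forall s, 0 <= s <= C -> d (sca T C) (sbc T B) - 2 * s <= d (sca T (C - s)) (sbc T (B + s))) /\
   d (sca T C) (sbc T B) <= 2 * C).
Proof.
  intros A B C.
  destruct (gromov M d Hmet T) as [GA [GB [GC [G1 [G2 G3]]]]].
  fold A B C in GA, GB, GC, G1, G2, G3.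
  destruct HT as [[a1 [a2 a3]] [[b1 [b2 b3]] [c1 [c2 c3]]]].
  split; [|split].
  - pose proof (leg_gen M d Hmet Hconv (fun s => sab T (A - s)) (fun s => sca T (C + s)) A GA)
      as L. cbv beta in L.
    rewrite Rminus_0_r, Rplus_0_r in L. apply L.
    + iso_solve a3.
    + iso_solve c3.
    + rewrite Rminus_diag, a1, G3, c2. reflexivity.
  - pose proof (leg_gen M d Hmet Hconv (fun s => sbc T (B - s)) (fun s => sab T (A + s)) B GB)
      as L. cbv beta in L.
    rewrite Rminus_0_r, Rplus_0_r in L. apply L.
    + iso_solve b3.
    + iso_solve a3.
    + rewrite Rminus_diag, b1, G1, a2. reflexivity.
  - pose proof (leg_gen M d Hmet Hconv (fun s => sca T (C - s)) (fun s => sbc T (B + s)) C GC)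
      as L. cbv beta in L.
    rewrite Rminus_0_r, Rplus_0_r in L. apply L.
    + iso_solve c3.
    + iso_solve b3.
    + rewrite Rminus_diag, c1, G2, b2. reflexivity.
Qed.

Theorem lemma2p3 (M : Type) (d : M -> M -> R)
  (Hmet : is_metric d) (Hgeo : geodesic_space d) (Hconv : convex_metric d)
  (Z : M -> Prop) (nu L : R) (Hnu : 0 < nu) (HL : 0 <= L)
  (T : gtriangle (M:=M)) (HT : geodesic_triangle d T) :
  thin_rel d nu T Z ->
  (exists sd : side, length_le d (fat_part_side d nu T sd) L) ->
  thin d (2 * (L + nu)) T.
Proof.
  intros _ [sd Hlen].
  pose proof (legs M d Hmet Hconv T HT) as LG. cbv zeta in LG.
  destruct LG as [[A1 [A2 A3]] [[B1 [B2 B3]] [C1 [C2 C3]]]].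
  destruct (gromov M d Hmet T) as [GA [GB [GC [G1 [G2 G3]]]]].
  pose proof HT as HT'.
  destruct HT' as [[a1 [a2 a3]] [[b1 [b2 b3]] [c1 [c2 c3]]]].
  pose proof (m_d0 M d Hmet) as H0. pose proof (m_pos M d Hmet) as Hp.
  pose proof Hmet as [_ [Hs Ht]].
  set (A := leg_a d T) in *. set (B := leg_b d T) in *. set (C := leg_c d T) in *.
  set (uA := d (sab T A) (sca T C)) in *.
  set (uB := d (sbc T B) (sab T A)) in *.
  set (uC := d (sca T C) (sbc T B)) in *.
  assert (TA : uA <= uB + uC).
  { pose proof (Ht (sab T A) (sbc T B) (sca T C)). pose proof (Hs (sab T A) (sbc T B)).
    pose proof (Hs (sbc T B) (sca T C)). unfold uA, uB, uC. lra. }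
  assert (TB : uB <= uC + uA).
  { pose proof (Ht (sbc T B) (sca T C) (sab T A)). pose proof (Hs (sca T C) (sab T A)).
    pose proof (Hs (sbc T B) (sca T C)). unfold uA, uB, uC. lra. }
  assert (TC : uC <= uA + uB).
  { pose proof (Ht (sca T C) (sab T A) (sbc T B)). pose proof (Hs (sca T C) (sab T A)).
    pose proof (Hs (sab T A) (sbc T B)). unfold uA, uB, uC. lra. }
  pose proof (Hp (sab T A) (sca T C)) as PA. pose proof (Hp (sbc T B) (sab T A)) as PB.
  pose proof (Hp (sca T C) (sbc T B)) as PC. fold uA uB uC in PA, PB, PC.
  assert (Hall : uA <= 2 * (L + nu) /\ uB <= 2 * (L + nu) /\ uC <= 2 * (L + nu)).
  { destruct sd.
    - assert (S : uA + uB <= 2 * (L + nu)).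
      { apply (core nu L A B uA uB
          (fun t => 0 <= t <= d (va T) (vb T) /\ fat_part_side d nu T SAB (sab T t)));
        try assumption.
        - intros x Hx Hn. cbv beta; split; [split; lra|]. split.
          + exists (A - x). split; [simpl; lra | reflexivity].
          + refine (proj1 (fat_of M d T nu _ _ _ (fib_LA1 M d Hmet T x Hx) (fib_LA2 M d Hmet T x Hx) _)).
            fold A B C. pose proof (A2 x ltac:(split; lra)). lra.
        - intros x Hx Hn. cbv beta; split; [split; lra|]. split.
          + exists (A + x). split; [simpl; lra | reflexivity].
          + refine (proj2 (fat_of M d T nu _ _ _ (fib_LB1 M d Hmet T x Hx) (fib_LB2 M d Hmet T x Hx) _)).
            fold A B C. pose proof (B2 x ltac:(split; lra)). lra.
        - intros Hn. cbv beta; split; [split; lra|]. split.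
          + exists A. split; [simpl; lra | reflexivity].
          + destruct Hn as [Hn|Hn].
            * exact (proj1 (fat_of M d T nu _ _ _ (fib_C1 M d Hmet T) (fib_C3 M d Hmet T) Hn)).
            * exact (proj2 (fat_of M d T nu _ _ _ (fib_C2 M d Hmet T) (fib_C1 M d Hmet T) Hn)).
        - intros t t' [Ht1 Hf1] [Ht2 Hf2]. pose proof (Hlen _ _ Hf1 Hf2) as HH.
          rewrite a3 in HH by lra. rewrite Rabs_minus_sym in HH.
          pose proof (Rle_abs (t' - t)). lra. }
      lra.
    - assert (S : uB + uC <= 2 * (L + nu)).
      { apply (core nu L B C uB uC
          (fun t => 0 <= t <= d (vb T) (vc T) /\ fat_part_side d nu T SBC (sbc T t)));
        try assumption.
        - intros x Hx Hn. cbv beta; split; [split; lra|]. split.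
          + exists (B - x). split; [simpl; lra | reflexivity].
          + refine (proj1 (fat_of M d T nu _ _ _ (fib_LB1 M d Hmet T x Hx) (fib_LB2 M d Hmet T x Hx) _)).
            fold A B C. pose proof (B2 x ltac:(split; lra)). lra.
        - intros x Hx Hn. cbv beta; split; [split; lra|]. split.
          + exists (B + x). split; [simpl; lra | reflexivity].
          + refine (proj2 (fat_of M d T nu _ _ _ (fib_LC1 M d Hmet T x Hx) (fib_LC2 M d Hmet T x Hx) _)).
            fold A B C. pose proof (C2 x ltac:(split; lra)). lra.
        - intros Hn. cbv beta; split; [split; lra|]. split.
          + exists B. split; [simpl; lra | reflexivity].
          + destruct Hn as [Hn|Hn].
            * exact (proj1 (fat_of M d T nu _ _ _ (fib_C2 M d Hmet T) (fib_C1 M d Hmet T) Hn)).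
            * exact (proj2 (fat_of M d T nu _ _ _ (fib_C3 M d Hmet T) (fib_C2 M d Hmet T) Hn)).
        - intros t t' [Ht1 Hf1] [Ht2 Hf2]. pose proof (Hlen _ _ Hf1 Hf2) as HH.
          rewrite b3 in HH by lra. rewrite Rabs_minus_sym in HH.
          pose proof (Rle_abs (t' - t)). lra. }
      lra.
    - assert (S : uC + uA <= 2 * (L + nu)).
      { apply (core nu L C A uC uA
          (fun t => 0 <= t <= d (vc T) (va T) /\ fat_part_side d nu T SCA (sca T t)));
        try assumption.
        - intros x Hx Hn. cbv beta; split; [split; lra|]. split.
          + exists (C - x). split; [simpl; lra | reflexivity].
          + refine (proj1 (fat_of M d T nu _ _ _ (fib_LC1 M d Hmet T x Hx) (fib_LC2 M d Hmet T x Hx) _)).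
            fold A B C. pose proof (C2 x ltac:(split; lra)). lra.
        - intros x Hx Hn. cbv beta; split; [split; lra|]. split.
          + exists (C + x). split; [simpl; lra | reflexivity].
          + refine (proj2 (fat_of M d T nu _ _ _ (fib_LA1 M d Hmet T x Hx) (fib_LA2 M d Hmet T x Hx) _)).
            fold A B C. pose proof (A2 x ltac:(split; lra)). lra.
        - intros Hn. cbv beta; split; [split; lra|]. split.
          + exists C. split; [simpl; lra | reflexivity].
          + destruct Hn as [Hn|Hn].
            * exact (proj1 (fat_of M d T nu _ _ _ (fib_C3 M d Hmet T) (fib_C2 M d Hmet T) Hn)).
            * exact (proj2 (fat_of M d T nu _ _ _ (fib_C1 M d Hmet T) (fib_C3 M d Hmet T) Hn)).
        - intros t t' [Ht1 Hf1] [Ht2 Hf2]. pose proof (Hlen _ _ Hf1 Hf2) as HH.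
          rewrite c3 in HH by lra. rewrite Rabs_minus_sym in HH.
          pose proof (Rle_abs (t' - t)). lra. }
      lra. }
  destruct Hall as [UA [UB UC]].
  intros p x y Hx Hy.
  destruct (fiber_cases M d Hmet T p x Hx) as
    [[Ep Ex]|[[s [Hs1 [Ep Ex]]]|[[s [Hs1 [Ep Ex]]]|[s [Hs1 [Ep Ex]]]]]];
  destruct (fiber_cases M d Hmet T p y Hy) as
    [[Ep' Ey]|[[s' [Hs1' [Ep' Ey]]]|[[s' [Hs1' [Ep' Ey]]]|[s' [Hs1' [Ep' Ey]]]]]];
  try fold A B C in Ex; try fold A B C in Ey; try fold A B C in Hs1; try fold A B C in Hs1'; subst p; try discriminate;
  try (match goal with H : OnLeg _ _ = OnLeg _ _ |- _ => injection H; intros; subst s' end);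
  try (pose proof (A1 s ltac:(split; lra)));
  try (pose proof (B1 s ltac:(split; lra)));
  try (pose proof (C1 s ltac:(split; lra)));
  repeat match goal with H : _ \/ _ |- _ => destruct H end; subst x y;
  first [ rewrite H0; lra | fold uA uB uC; lra | rewrite Hs; fold uA uB uC; lra ].
Qed.
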